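(* Let $F(x;p):\mathbb{C}^n\times\mathbb{C}^m\to\mathbb{C}^n$ be affine-linear in the parameters $p$, let $p_0,p_1\in\mathbb{C}^m$, and let $H(x,t)=F(x;(1-t)p_0+tp_1)$, $H:\mathbb{C}^n\times[0,1]\to\mathbb{C}^n$, be analytic in $x$. Assume $x^\star\in\mathbb{C}^n$ satisfies $H(x^\star,t_0)=0$ for some $t_0\in[0,1]$. Let $L>0$ be a constant with $L\ge\|\square\partial_x^2H(I_1,[0,1])\|$, where $I_1$ is the interval box centered at $x^\star$ of radius $1$. Suppose the solution path $x(t)$ with $x(t_0)=x^\star$ is nonsingular for all $t\in[t_0,t_0+dt_0]\subset[0,1]$ for some $dt_0>0$. Let $Y=\partial_xH(x^\star,t_0)^{-1}$. Then there exist $0<r<1$ and $0<dt<1$ such that, with $I_r$ the interval box centered at $x^\star$ of radius $r$ and $T_{t_0,dt}=[t_0,t_0+dt]$, one has $K_{x^\star,Y}(I_r,T_{t_0,dt})\subset I_r$ and $\|\mathbf{1}_n-Y\cdot\square\partial_xH(I_r,T_{t_0,dt})\|<\frac{1}{\sqrt2}$; in particular, for every $t\in T_{t_0,dt}$, the path point $x(t)$ is the unique solution of $H(\cdot,t)=0$ in $I_r$.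
   Context: The solution path $x(t)$ satisfies $H(x(t),t)=0$; ''nonsingular'' means $\partial_xH(x(t),t)$ (Jacobian with respect to $x$) is invertible. Complex intervals are products of real intervals for real and imaginary parts; the interval box centered at $c$ of radius $r$ has real and imaginary parts of coordinate $j$ equal to $[\Re c_j-r,\Re c_j+r]$ and $[\Im c_j-r,\Im c_j+r]$. $\square G(I,T)$ denotes an interval extension (computed by interval arithmetic) containing all values of $G$ on $I\times T$. The parametric Krawczyk operator is $K_{x,Y}(I,T)=x-Y\cdot\square H(x,T)+(\mathbf{1}_n-Y\cdot\square\partial_xH(I,T))\cdot(I-x)$. Norms: $\|x\|=\max_i|x_i|$; for an interval box $\|I\|=\max_i\max_{z\in I_i}|z|$; for an interval matrix (or tensor) $M$, $\|M\|$ is the maximum over its members of the operator norm with respect to the max norm. *)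

(* Defs.v *)
From HB Require Import structures.
From mathcomp Require Import all_boot all_order all_algebra.
From mathcomp Require Import complex.
From mathcomp Require Import reals.
Set Implicit Arguments. Unset Strict Implicit. Unset Printing Implicit Defensive.
Import Order.TTheory GRing.Theory Num.Theory.
Local Open Scope ring_scope.

Section KrawczykDefs.
Variable R : realType.
Local Notation C := (R[i]).
Local Notation ReC := (@complex.Re R).
Local Notation ImC := (@complex.Im R).

Definition cmod (z : C) : R := Num.sqrt (ReC z ^+ 2 + ImC z ^+ 2).

Definition vnorm n (v : 'cV[C]_n) : R := \big[Num.max/0]_(i < n) cmod (v i 0).

(* max-of-entries norm of a matrix; only used to define differentiability
   of the matrix valued Jacobian (any norm gives the same notion) *)
Definition mnorm n (M : 'M[C]_n) : R :=
  \big[Num.max/0]_(i < n) \big[Num.max/0]_(j < n) cmod (M i j).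

Definition opnorm_le n (M : 'M[C]_n) (c : R) : Prop :=
  forall v : 'cV[C]_n, vnorm (M *m v) <= c * vnorm v.

(* a second-derivative tensor D is represented as k |-> dJ/dx_k (a matrix);
   its action on a direction h is  D[h] = sum_k h_k D_k. *)
Definition tapply n (D : 'I_n -> 'M[C]_n) (h : 'cV[C]_n) : 'M[C]_n :=
  \sum_(k < n) h k 0 *: D k.

Definition tnorm_le n (D : 'I_n -> 'M[C]_n) (c : R) : Prop :=
  forall h v : 'cV[C]_n, vnorm (tapply D h *m v) <= c * vnorm h * vnorm v.

Definition cderiv n (f : 'cV[C]_n -> 'cV[C]_n) (Df : 'M[C]_n) (x : 'cV[C]_n) :=
  forall eps : R, 0 < eps -> exists2 delta : R, 0 < delta &
    forall h : 'cV[C]_n, vnorm h < delta ->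
      vnorm (f (x + h) - f x - Df *m h) <= eps * vnorm h.

Definition cderivM n (J : 'cV[C]_n -> 'M[C]_n) (D : 'I_n -> 'M[C]_n)
    (x : 'cV[C]_n) :=
  forall eps : R, 0 < eps -> exists2 delta : R, 0 < delta &
    forall h : 'cV[C]_n, vnorm h < delta ->
      mnorm (J (x + h) - J x - tapply D h) <= eps * vnorm h.

Definition rint := (R * R)%type.
Definition in_rint (I : rint) (x : R) : bool := (I.1 <= x) && (x <= I.2).
Definition rwidth (I : rint) : R := I.2 - I.1.

Definition radd (I J : rint) : rint := (I.1 + J.1, I.2 + J.2).
Definition rsub (I J : rint) : rint := (I.1 - J.2, I.2 - J.1).
Definition rmul (I J : rint) : rint :=
  (Num.min (Num.min (I.1 * J.1) (I.1 * J.2)) (Num.min (I.2 * J.1) (I.2 * J.2)),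
   Num.max (Num.max (I.1 * J.1) (I.1 * J.2)) (Num.max (I.2 * J.1) (I.2 * J.2))).

Definition cint := (rint * rint)%type.
Definition in_cint (I : cint) (z : C) : bool := in_rint I.1 (ReC z) && in_rint I.2 (ImC z).
Definition cpt (z : C) : cint := ((ReC z, ReC z), (ImC z, ImC z)).
Definition cadd (I J : cint) : cint := (radd I.1 J.1, radd I.2 J.2).
Definition csub (I J : cint) : cint := (rsub I.1 J.1, rsub I.2 J.2).
(* (a + ib)(c + id) = (ac - bd) + i(ad + bc), evaluated in real interval arithmetic *)
Definition cmul (I J : cint) : cint :=
  (rsub (rmul I.1 J.1) (rmul I.2 J.2), radd (rmul I.1 J.2) (rmul I.2 J.1)).

Definition ibox n := 'I_n -> cint.
Definition imx n := 'I_n -> 'I_n -> cint.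
Definition iten n := 'I_n -> 'I_n -> 'I_n -> cint.   (* indexed (k, i, j) *)

Definition in_box n (B : ibox n) (v : 'cV[C]_n) : Prop := forall i, in_cint (B i) (v i 0).
Definition in_imx n (B : imx n) (M : 'M[C]_n) : Prop := forall i j, in_cint (B i j) (M i j).
Definition in_iten n (B : iten n) (D : 'I_n -> 'M[C]_n) : Prop :=
  forall k i j, in_cint (B k i j) (D k i j).
Definition box_sub n (A B : ibox n) : Prop := forall v, in_box A v -> in_box B v.

Definition box_width_le n (B : ibox n) (d : R) : Prop :=
  forall i, rwidth (B i).1 <= d /\ rwidth (B i).2 <= d.

Definition cbox n (c : 'cV[C]_n) (r : R) : ibox n :=
  fun i => ((ReC (c i 0) - r, ReC (c i 0) + r), (ImC (c i 0) - r, ImC (c i 0) + r)).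
Definition ptbox n (c : 'cV[C]_n) : ibox n := fun i => cpt (c i 0).
Definition ptmx n (M : 'M[C]_n) : imx n := fun i j => cpt (M i j).

Definition isum n (f : 'I_n -> cint) : cint := \big[cadd/cpt 0]_(j < n) f j.
Definition imxv n (A : imx n) (v : ibox n) : ibox n :=
  fun i => isum (fun j => cmul (A i j) (v j)).
Definition imxm n (A B : imx n) : imx n :=
  fun i k => isum (fun j => cmul (A i j) (B j k)).
Definition ibadd n (A B : ibox n) : ibox n := fun i => cadd (A i) (B i).
Definition ibsub n (A B : ibox n) : ibox n := fun i => csub (A i) (B i).
Definition imsub n (A B : imx n) : imx n := fun i j => csub (A i j) (B i j).

Definition id_minus n (Y : 'M[C]_n) (B : imx n) : imx n :=
  imsub (ptmx 1%:M) (imxm (ptmx Y) B).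

(* parametric Krawczyk operator, given the interval evaluations
   BH = box H(x, T) and BJ = box d_xH(I, T):
   K = x - Y . BH + (1_n - Y . BJ) . (I - x) *)
Definition krawczyk n (x : 'cV[C]_n) (Y : 'M[C]_n) (BH : ibox n) (BJ : imx n)
    (I : ibox n) : ibox n :=
  ibadd (ibsub (ptbox x) (imxv (ptmx Y) BH))
        (imxv (id_minus Y BJ) (ibsub I (ptbox x))).

Definition encloses_v n (G : 'cV[C]_n -> R -> 'cV[C]_n) (E : ibox n -> rint -> ibox n) :=
  forall I T x t, 0 <= T.1 -> T.2 <= 1 -> in_box I x -> in_rint T t ->
    in_box (E I T) (G x t).
Definition encloses_m n (G : 'cV[C]_n -> R -> 'M[C]_n) (E : ibox n -> rint -> imx n) :=
  forall I T x t, 0 <= T.1 -> T.2 <= 1 -> in_box I x -> in_rint T t ->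
    in_imx (E I T) (G x t).
Definition encloses_t n (G : 'cV[C]_n -> R -> 'I_n -> 'M[C]_n)
    (E : ibox n -> rint -> iten n) :=
  forall I T x t, 0 <= T.1 -> T.2 <= 1 -> in_box I x -> in_rint T t ->
    in_iten (E I T) (G x t).

(* convergence of the interval extension (as enjoyed by interval arithmetic):
   the enclosure of a small box around (x,t) is close to G(x,t) *)
Definition converges_v n (G : 'cV[C]_n -> R -> 'cV[C]_n) (E : ibox n -> rint -> ibox n) :=
  forall x t, 0 <= t <= 1 -> forall eps : R, 0 < eps -> exists2 delta : R, 0 < delta &
    forall I T, 0 <= T.1 -> T.2 <= 1 -> in_box I x -> in_rint T t ->
      box_width_le I delta -> rwidth T <= delta ->
      forall y, in_box (E I T) y -> vnorm (y - G x t) <= eps.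
Definition converges_m n (G : 'cV[C]_n -> R -> 'M[C]_n) (E : ibox n -> rint -> imx n) :=
  forall x t, 0 <= t <= 1 -> forall eps : R, 0 < eps -> exists2 delta : R, 0 < delta &
    forall I T, 0 <= T.1 -> T.2 <= 1 -> in_box I x -> in_rint T t ->
      box_width_le I delta -> rwidth T <= delta ->
      forall M, in_imx (E I T) M -> mnorm (M - G x t) <= eps.

Definition affine_in_params n m (F : 'cV[C]_n -> 'cV[C]_m -> 'cV[C]_n) :=
  forall x p q (l : C), F x ((1 - l) *: p + l *: q) = (1 - l) *: F x p + l *: F x q.

Definition homotopy n m (F : 'cV[C]_n -> 'cV[C]_m -> 'cV[C]_n) (p0 p1 : 'cV[C]_m)
    (x : 'cV[C]_n) (t : R) : 'cV[C]_n :=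
  F x ((1 - (t%:C)%C) *: p0 + (t%:C)%C *: p1).

Definition path_continuous_on n (xp : R -> 'cV[C]_n) (a b : R) :=
  forall s, a <= s <= b -> forall eps : R, 0 < eps -> exists2 delta : R, 0 < delta &
    forall s', a <= s' <= b -> `|s' - s| < delta -> vnorm (xp s' - xp s) < eps.

End KrawczykDefs.

(* Main.v *)
Require Import Defs.
From HB Require Import structures.
From mathcomp Require Import all_boot all_order all_algebra.
From mathcomp Require Import complex.
From mathcomp Require Import reals classical_sets boolp.
From mathcomp Require Import ring lra.
Import Order.TTheory GRing.Theory Num.Theory.
Local Open Scope ring_scope.

Section Basics.
Variable R : realType.
Local Notation C := (R[i]).
Local Notation Re := (@complex.Re R).
Local Notation Im := (@complex.Im R).

Lemma ReD (a b : C) : Re (a + b) = Re a + Re b.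
Proof. by case: a => ? ?; case: b. Qed.
Lemma ImD (a b : C) : Im (a + b) = Im a + Im b.
Proof. by case: a => ? ?; case: b. Qed.
Lemma ReB (a b : C) : Re (a - b) = Re a - Re b.
Proof. by case: a => ? ?; case: b. Qed.
Lemma ImB (a b : C) : Im (a - b) = Im a - Im b.
Proof. by case: a => ? ?; case: b. Qed.
Lemma ReM (a b : C) : Re (a * b) = Re a * Re b - Im a * Im b.
Proof. by case: a => ? ?; case: b. Qed.
Lemma ImM (a b : C) : Im (a * b) = Re a * Im b + Im a * Re b.
Proof. by case: a => ? ?; case: b. Qed.
Lemma Re0 : Re 0 = 0. Proof. by []. Qed.
Lemma Im0 : Im 0 = 0. Proof. by []. Qed.

Lemma cmodE (z : C) : ((cmod z)%:C)%C = `|z|.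
Proof. by rewrite normc_def. Qed.
Lemma cmod_ge0 (z : C) : 0 <= cmod z.
Proof. exact: sqrtr_ge0. Qed.
Lemma cmodD (x y : C) : cmod (x + y) <= cmod x + cmod y.
Proof. by rewrite -lecR rmorphD /= !cmodE ler_normD. Qed.
Lemma cmodM (x y : C) : cmod (x * y) = cmod x * cmod y.
Proof. by apply: complexI; rewrite rmorphM /= !cmodE normrM. Qed.
Lemma cmodN (x : C) : cmod (- x) = cmod x.
Proof. by apply: complexI; rewrite !cmodE normrN. Qed.
Lemma cmodB (x y : C) : cmod (x - y) = cmod (y - x).
Proof. by rewrite -cmodN opprB. Qed.
Lemma cmod0 : cmod (0 : C) = 0.
Proof. by apply: complexI; rewrite !cmodE normr0. Qed.
Lemma cmod_eq0 (z : C) : cmod z = 0 -> z = 0.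
Proof. by move=> h; apply/eqP; rewrite -normr_eq0 -cmodE h. Qed.
Lemma cmod_real (a : R) : cmod (R:=R) ((a%:C)%C) = `|a|.
Proof. by rewrite /cmod /= expr0n /= addr0 sqrtr_sqr. Qed.
Lemma Re_le (x : C) : `|Re x| <= cmod x.
Proof.
rewrite /cmod -sqrtr_sqr ler_sqrt; last by rewrite addr_ge0 ?sqr_ge0.
by rewrite lerDl sqr_ge0.
Qed.
Lemma Im_le (x : C) : `|Im x| <= cmod x.
Proof.
rewrite /cmod -sqrtr_sqr ler_sqrt; last by rewrite addr_ge0 ?sqr_ge0.
by rewrite lerDr sqr_ge0.
Qed.
Lemma cmod_le (x : C) : cmod x <= `|Re x| + `|Im x|.
Proof.
rewrite /cmod -[X in _ <= X]ger0_norm ?addr_ge0 // -sqrtr_sqr ler_sqrt ?sqr_ge0 //.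
set a := Re x; set b := Im x.
have ha : a ^+ 2 = `|a| ^+ 2 by rewrite real_normK ?num_real.
have hb : b ^+ 2 = `|b| ^+ 2 by rewrite real_normK ?num_real.
rewrite ha hb sqrrD -addrA lerD2l lerDr.
by rewrite mulrn_wge0 // mulr_ge0.
Qed.
Lemma cmod_sum n (f : 'I_n -> C) : cmod (\sum_i f i) <= \sum_i cmod (f i).
Proof.
rewrite -lecR cmodE rmorph_sum /=; apply: (le_trans (ler_norm_sum _ _ _)).
by apply: ler_sum => i _; rewrite cmodE.
Qed.

Lemma vnorm_ge0 n (v : 'cV[C]_n) : 0 <= vnorm v.
Proof.
rewrite /vnorm; elim/big_ind: _ => //; last by move=> i _; exact: cmod_ge0.
by move=> x y hx hy; rewrite le_max hx.
Qed.
Lemma cmod_vnorm n (v : 'cV[C]_n) i : cmod (v i 0) <= vnorm v.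
Proof. exact: (le_bigmax 0 (fun i => cmod (v i 0)) i). Qed.
Lemma vnorm_le n (v : 'cV[C]_n) c : 0 <= c -> (forall i, cmod (v i 0) <= c) -> vnorm v <= c.
Proof. by move=> c0 h; apply: bigmax_le. Qed.
Lemma cmod_mnorm n (M : 'M[C]_n) i j : cmod (M i j) <= mnorm M.
Proof.
apply: le_trans (le_bigmax 0 (fun i => \big[Num.max/0]_(j < n) cmod (M i j)) i).
exact: (le_bigmax 0 (fun j => cmod (M i j)) j).
Qed.
Lemma vnormD n (u v : 'cV[C]_n) : vnorm (u + v) <= vnorm u + vnorm v.
Proof.
apply: vnorm_le; first by rewrite addr_ge0 ?vnorm_ge0.
by move=> i; rewrite mxE (le_trans (cmodD _ _)) // lerD ?cmod_vnorm.
Qed.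
Lemma vnormN n (v : 'cV[C]_n) : vnorm (- v) = vnorm v.
Proof. by rewrite /vnorm; apply: eq_bigr => i _; rewrite mxE cmodN. Qed.
Lemma vnormB n (u v : 'cV[C]_n) : vnorm (u - v) = vnorm (v - u).
Proof. by rewrite -vnormN opprB. Qed.
Lemma vnormZ n (a : C) (v : 'cV[C]_n) : vnorm (a *: v) <= cmod a * vnorm v.
Proof.
apply: vnorm_le; first by rewrite mulr_ge0 ?cmod_ge0 ?vnorm_ge0.
by move=> i; rewrite mxE cmodM ler_wpM2l ?cmod_ge0 ?cmod_vnorm.
Qed.
Lemma vnorm_eq0 n (v : 'cV[C]_n) : vnorm v <= 0 -> v = 0.
Proof.
move=> h; apply/matrixP => i j; rewrite (ord1 j) mxE; apply: cmod_eq0.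
by apply/le_anti; rewrite cmod_ge0 andbT (le_trans (cmod_vnorm _ v i)) .
Qed.
Lemma vnorm0 n : vnorm (0 : 'cV[C]_n) = 0.
Proof.
apply/le_anti; rewrite vnorm_ge0 andbT; apply: vnorm_le => // i.
by rewrite mxE cmod0.
Qed.
Lemma mulmx_vnorm n (M : 'M[C]_n) (v : 'cV[C]_n) b :
  0 <= b -> (forall i j, cmod (M i j) <= b) -> vnorm (M *m v) <= n%:R * b * vnorm v.
Proof.
move=> b0 h; apply: vnorm_le; first by rewrite !mulr_ge0 ?vnorm_ge0.
move=> i; rewrite mxE (le_trans (cmod_sum _ _)) //.
rewrite -mulrA mulr_natl -[n in _ *+ n]card_ord -sumr_const.
by apply: ler_sum => j _; rewrite cmodM ler_pM ?cmod_ge0 ?cmod_vnorm.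
Qed.

Definition within (I : rint R) (c e : R) := `|I.1 - c| <= e /\ `|I.2 - c| <= e.
Definition cwithin (I : cint R) (z : C) (e : R) :=
  within I.1 (Re z) e /\ within I.2 (Im z) e.

Lemma within_le I c e e' : e <= e' -> within I c e -> within I c e'.
Proof. by move=> h [h1 h2]; split; apply: le_trans h. Qed.
Lemma cwithin_le I z e e' : e <= e' -> cwithin I z e -> cwithin I z e'.
Proof. by move=> h [h1 h2]; split; apply: within_le h _. Qed.
Arguments within_le {I c e e'}.
Arguments cwithin_le {I z e e'}.
Lemma cwithin_pt z : cwithin (cpt z) z 0.
Proof. by split; split; rewrite /= subrr normr0. Qed.

Lemma within_add I J a b e1 e2 :
  within I a e1 -> within J b e2 -> within (radd I J) (a + b) (e1 + e2).
Proof.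
rewrite /within /= !ler_norml => -[/andP[h1 h2] /andP[h3 h4]] [/andP[h5 h6] /andP[h7 h8]].
by split; apply/andP; split; lra.
Qed.
Lemma within_sub I J a b e1 e2 :
  within I a e1 -> within J b e2 -> within (rsub I J) (a - b) (e1 + e2).
Proof.
rewrite /within /= !ler_norml => -[/andP[h1 h2] /andP[h3 h4]] [/andP[h5 h6] /andP[h7 h8]].
by split; apply/andP; split; lra.
Qed.

Lemma corner (x y a b e1 e2 : R) : `|x - a| <= e1 -> `|y - b| <= e2 ->
  `|x * y - a * b| <= e1 * (`|b| + e2) + `|a| * e2.
Proof.
move=> h1 h2.
have -> : x * y - a * b = (x - a) * y + a * (y - b) by ring.
apply: (le_trans (ler_normD _ _)); rewrite !normrM; apply: lerD.
  apply: ler_pM => //; have := ler_normD (y - b) b; rewrite subrK => H; lra.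
by apply: ler_wpM2l.
Qed.

Arguments corner {x y a b e1 e2}.
Lemma minmax_close (u v c e : R) : `|u - c| <= e -> `|v - c| <= e ->
  `|Num.min u v - c| <= e /\ `|Num.max u v - c| <= e.
Proof. by move=> h1 h2; rewrite minEle maxEle; case: ifP. Qed.

Arguments minmax_close {u v c e}.
Lemma within_mul I J a b e1 e2 :
  within I a e1 -> within J b e2 ->
  within (rmul I J) (a * b) (e1 * (`|b| + e2) + `|a| * e2).
Proof.
move=> [h1 h2] [h3 h4].
have c11 := corner h1 h3; have c12 := corner h1 h4.
have c21 := corner h2 h3; have c22 := corner h2 h4.
have [m1 M1] := minmax_close c11 c12.
have [m2 M2] := minmax_close c21 c22.
have [m3 _] := minmax_close m1 m2.
have [_ M3] := minmax_close M1 M2.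
by split.
Qed.

Arguments within_mul {I J a b e1 e2}.
Arguments within_add {I J a b e1 e2}.
Arguments within_sub {I J a b e1 e2}.
Lemma cwithin_add I J a b e1 e2 :
  cwithin I a e1 -> cwithin J b e2 -> cwithin (cadd I J) (a + b) (e1 + e2).
Proof.
move=> [h1 h2] [h3 h4]; split; rewrite /= ?ReD ?ImD; exact: within_add.
Qed.
Lemma cwithin_sub I J a b e1 e2 :
  cwithin I a e1 -> cwithin J b e2 -> cwithin (csub I J) (a - b) (e1 + e2).
Proof.
move=> [h1 h2] [h3 h4]; split; rewrite /= ?ReB ?ImB; exact: within_sub.
Qed.

Arguments cwithin_add {I J a b e1 e2}.
Arguments cwithin_sub {I J a b e1 e2}.
Lemma cwithin_mul I J a b e1 e2 : 0 <= e1 -> 0 <= e2 ->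
  cwithin I a e1 -> cwithin J b e2 ->
  cwithin (cmul I J) (a * b) (2 * (e1 * (cmod b + e2) + cmod a * e2)).
Proof.
move=> e10 e20 [h1 h2] [h3 h4].
set E := e1 * (cmod b + e2) + cmod a * e2.
have bnd : forall x y : R, `|x| <= cmod a -> `|y| <= cmod b ->
    e1 * (`|y| + e2) + `|x| * e2 <= E.
  move=> x y hx hy; apply: lerD; first by apply: ler_wpM2l => //; rewrite lerD2r.
  exact: ler_wpM2r.
have -> : 2 * E = E + E by rewrite mulr2n mulrDl mul1r.
split; rewrite /= ?ReM ?ImM.
  apply: within_sub.
    exact: (within_le (bnd _ _ (Re_le a) (Re_le b)) (within_mul h1 h3)).
  exact: (within_le (bnd _ _ (Im_le a) (Im_le b)) (within_mul h2 h4)).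
apply: within_add.
  exact: (within_le (bnd _ _ (Re_le a) (Im_le b)) (within_mul h1 h4)).
exact: (within_le (bnd _ _ (Im_le a) (Re_le b)) (within_mul h2 h3)).
Qed.

Lemma cwithin_isum n (f : 'I_n -> cint R) (g : 'I_n -> C) E :
  (forall j, cwithin (f j) (g j) E) -> cwithin (isum f) (\sum_j g j) (n%:R * E).
Proof.
move=> h.
have := @big_ind3 _ _ _ (fun I z e => cwithin I z e) (cpt 0) (@cadd R) 0 +%R 0 +%R
  (cwithin_pt 0) (fun _ _ _ _ _ _ h1 h2 => cwithin_add h1 h2) _ (index_enum 'I_n) xpredT
  f g (fun _ => E) (fun j _ => h j).
have e : \sum_(i < n) E = n%:R * E by rewrite sumr_const card_ord mulr_natl.
by rewrite -e; apply.
Qed.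

Lemma within_in I c e x : within I c e -> in_rint I x -> `|x - c| <= e.
Proof.
rewrite /within /in_rint !ler_norml => -[/andP[h1 h2] /andP[h3 h4]] /andP[h5 h6].
by apply/andP; split; lra.
Qed.

Lemma box_dev n (B : ibox R n) (v : 'cV[C]_n) e : in_box B v ->
  (forall y, in_box B y -> vnorm (y - v) <= e) -> forall j, cwithin (B j) (v j 0) e.
Proof.
move=> hv hy j.
have key : forall w, in_cint (B j) w -> cmod (w - v j 0) <= e.
  move=> w hw; pose y := \col_k (if k == j then w else v k 0).
  have : in_box B y by move=> k; rewrite /y mxE; case: eqP => [->|_] //.
  move/hy => h; apply: le_trans h.
  by apply: le_trans (cmod_vnorm _ _ j); rewrite !mxE eqxx.
move: (hv j); rewrite /in_cint /in_rint => /andP[/andP[a1 a2] /andP[b1 b2]].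
have hre : forall p, (B j).1.1 <= p <= (B j).1.2 -> `|p - Re (v j 0)| <= e.
  move=> p hp; apply: le_trans (key (p +i* Im (v j 0))%C _).
    by apply: le_trans (Re_le _); rewrite ReB.
  by rewrite /in_cint /in_rint /= hp b1 b2.
have him : forall p, (B j).2.1 <= p <= (B j).2.2 -> `|p - Im (v j 0)| <= e.
  move=> p hp; apply: le_trans (key (Re (v j 0) +i* p)%C _).
    by apply: le_trans (Im_le _); rewrite ImB.
  by rewrite /in_cint /in_rint /= hp a1 a2.
split; split.
- by apply: hre; rewrite lexx (le_trans a1 a2).
- by apply: hre; rewrite lexx (le_trans a1 a2).
- by apply: him; rewrite lexx (le_trans b1 b2).
- by apply: him; rewrite lexx (le_trans b1 b2).
Qed.

Lemma mx_dev n (B : imx R n) (M : 'M[C]_n) e : in_imx B M ->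
  (forall M', in_imx B M' -> mnorm (M' - M) <= e) -> forall i j, cwithin (B i j) (M i j) e.
Proof.
move=> hv hy i j.
have key : forall w, in_cint (B i j) w -> cmod (w - M i j) <= e.
  move=> w hw; pose y := \matrix_(a, b) (if (a == i) && (b == j) then w else M a b).
  have : in_imx B y.
    by move=> a b; rewrite /y mxE; case: eqP => [->|_]; case: eqP => [->|_] //.
  move/hy => h; apply: le_trans h.
  by apply: le_trans (cmod_mnorm _ _ i j); rewrite !mxE !eqxx.
move: (hv i j); rewrite /in_cint /in_rint => /andP[/andP[a1 a2] /andP[b1 b2]].
have hre : forall p, (B i j).1.1 <= p <= (B i j).1.2 -> `|p - Re (M i j)| <= e.
  move=> p hp; apply: le_trans (key (p +i* Im (M i j))%C _).
    by apply: le_trans (Re_le _); rewrite ReB.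
  by rewrite /in_cint /in_rint /= hp b1 b2.
have him : forall p, (B i j).2.1 <= p <= (B i j).2.2 -> `|p - Im (M i j)| <= e.
  move=> p hp; apply: le_trans (key (Re (M i j) +i* p)%C _).
    by apply: le_trans (Im_le _); rewrite ImB.
  by rewrite /in_cint /in_rint /= hp a1 a2.
split; split.
- by apply: hre; rewrite lexx (le_trans a1 a2).
- by apply: hre; rewrite lexx (le_trans a1 a2).
- by apply: him; rewrite lexx (le_trans b1 b2).
- by apply: him; rewrite lexx (le_trans b1 b2).
Qed.

Arguments vnormD {n}. Arguments vnormN {n}. Arguments vnormB {n}. Arguments vnormZ {n}.
Arguments vnorm_eq0 {n}. Arguments vnorm0 {n}. Arguments mulmx_vnorm {n}.
Arguments cmod_vnorm {n}. Arguments cmod_mnorm {n}. Arguments vnorm_le {n}.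
Arguments vnorm_ge0 {n}. Arguments cmod_sum {n}.

Lemma zmod_id (V : zmodType) (z k a b c : V) : z + k - a - (z - b) = k - c - (a - b - c).
Proof.
rewrite !opprB [RHS]addrA subrK -!addrA addrCA; congr (_ + _).
by rewrite addrCA [z + _]addrCA subrr addr0 addrC.
Qed.

Arguments zmod_id {V z k a b} c.
Lemma small_pos (K b : R) : 0 <= K -> 0 < b -> exists2 e, 0 < e & K * e <= b.
Proof.
move=> K0 b0; exists (b / (K + 1)).
  by rewrite divr_gt0 // ltr_wpDl.
rewrite mulrA ler_pdivrMr ?ltr_wpDl //; nra.
Qed.

Arguments small_pos {K b}.
Lemma real_ind (a b : R) (P : R -> Prop) : a <= b ->
  (forall s, a <= s <= b -> (forall u, a <= u < s -> P u) ->
     exists2 d, 0 < d & forall u, a <= u <= b -> u < s + d -> P u) ->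
  forall s, a <= s <= b -> P s.
Proof.
move=> ab hyp.
have [d0 d0p hd0] : exists2 d, 0 < d & forall u, a <= u <= b -> u < a + d -> P u.
  apply: hyp; first by rewrite lexx ab.
  by move=> u /andP[h1 h2]; exfalso; lra.
pose E := [set x : R | a <= x <= b /\ forall u, a <= u <= x -> P u]%classic.
have Ea : E a.
  split; first by rewrite lexx ab.
  move=> u /andP[h1 h2]; apply: hd0; first by rewrite h1 (le_trans h2 ab).
  lra.
have hs : has_sup E.
  split; first by exists a.
  by exists b => x [/andP[_ h] _].
set s := sup E.
have as_ : a <= s by apply: sup_upper_bound.
have sb : s <= b.
  by apply: ge_sup; [exists a | move=> x [/andP[_ h] _]].
have below : forall u, a <= u < s -> P u.
  move=> u /andP[h1 h2].
  have [e [/andP[e1 e2] e3] he] := sup_adherent (eps := s - u) (ltac:(by rewrite subr_gt0)) hs.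
  apply: e3; rewrite h1 /=; rewrite -/s in he; lra.
have [d dp hd] := hyp s (ltac:(by rewrite as_ sb)) below.
have key : forall x, a <= x <= b -> x < s + d -> (forall u, a <= u <= x -> P u).
  move=> x /andP[x1 x2] xs u /andP[u1 u2]; apply: hd; first by rewrite u1 (le_trans u2 x2).
  lra.
have [h|h] := leP b (s + d / 2).
  move=> t ht; apply: (key b); first by rewrite ab lexx.
    have : E b.
      split; first by rewrite ab lexx.
      apply: key; [by rewrite ab lexx| lra].
    by move/(sup_upper_bound hs); rewrite -/s => hb; lra.
  exact: ht.
have : E (s + d / 2).
  split; first by apply/andP; split; lra.
  apply: key; first by apply/andP; split; lra.
  lra.
by move/(sup_upper_bound hs); rewrite -/s => hb; exfalso; lra.
Qed.

Arguments real_ind {a b P}.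

Lemma local_contr n (G : 'cV[C]_n -> 'cV[C]_n) (DG Y : 'M[C]_n) z c q CY :
  cderiv G DG z -> 0 <= CY -> c < q ->
  (forall v, vnorm ((1%:M - Y *m DG) *m v) <= c * vnorm v) ->
  (forall v, vnorm (Y *m v) <= CY * vnorm v) ->
  exists2 d, 0 < d & forall k, vnorm k < d ->
    vnorm ((z + k - Y *m G (z + k)) - (z - Y *m G z)) <= q * vnorm k.
Proof.
move=> hd CY0 cq hc hY.
have [e ep he] := small_pos CY0 (ltac:(by rewrite subr_gt0) : 0 < q - c).
have [d dp hdd] := hd e ep.
exists d => // k hk.
rewrite (zmod_id ((Y *m DG) *m k)).
have -> : k - (Y *m DG) *m k = (1%:M - Y *m DG) *m k by rewrite mulmxBl mul1mx.
have -> : Y *m G (z + k) - Y *m G z - (Y *m DG) *m k =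
          Y *m (G (z + k) - G z - DG *m k) by rewrite !mulmxBr mulmxA.
apply: (le_trans (vnormD _ _)); rewrite vnormN.
apply: le_trans (lerD (hc k) (hY _)) _.
have := hdd k hk => h1.
have vk0 := vnorm_ge0 k.
have h2 : CY * vnorm (G (z + k) - G z - DG *m k) <= CY * (e * vnorm k) by apply: ler_wpM2l.
have h3 : CY * (e * vnorm k) <= (q - c) * vnorm k by rewrite mulrA ler_wpM2r.
lra.
Qed.

Lemma lin1 (a b X Y : R) : b <= a + (X - Y) -> a <= Y -> b <= X.
Proof. move=> *; lra. Qed.

Lemma seg_lip n (g : 'cV[C]_n -> 'cV[C]_n) (S : 'cV[C]_n -> Prop) q :
  0 <= q ->
  (forall z1 z2 (s : R), S z1 -> S z2 -> 0 <= s <= 1 -> S (z2 + ((s%:C)%C) *: (z1 - z2))) ->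
  (forall z, S z -> exists2 d, 0 < d & forall k, vnorm k < d ->
      vnorm (g (z + k) - g z) <= q * vnorm k) ->
  forall z1 z2, S z1 -> S z2 -> vnorm (g z1 - g z2) <= q * vnorm (z1 - z2).
Proof.
move=> q0 hconv hloc z1 z2 S1 S2.
set h := z1 - z2.
pose z (s : R) := z2 + ((s%:C)%C) *: h.
pose f s := vnorm (g (z s) - g z2).
have zu : forall s u, z u = z s + (((u - s)%:C)%C) *: h.
  move=> s u; rewrite /z rmorphB scalerBl /= -addrA; congr (_ + _).
  by rewrite addrC subrK.
have z1E : z 1 = z1 by rewrite /z scale1r /h addrC subrK.
have z0E : z 0 = z2 by rewrite /z scale0r addr0.
suff: f 1 <= q * 1 * vnorm h by rewrite /f z1E mulr1.
have RI := @real_ind 0 1 (fun s => f s <= q * s * vnorm h).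
apply: (RI ler01 _ 1 (ltac:(by rewrite ler01 lexx))).
move=> s /andP[s0 s1] hbelow.
have [d dp hd] := hloc (z s) (hconv z1 z2 s S1 S2 (ltac:(by rewrite s0 s1))).
have vh0 := vnorm_ge0 h.
set d' := d / (vnorm h + 1).
have vh1 : 0 < vnorm h + 1 by rewrite ltr_wpDl.
have d'p : 0 < d' by rewrite divr_gt0.
have step : forall u, `|u - s| < d' ->
    vnorm (g (z u) - g (z s)) <= q * (`|u - s| * vnorm h).
  move=> u hu; rewrite (zu s u).
  have hk : vnorm ((((u - s)%:C)%C) *: h) <= `|u - s| * vnorm h.
    by rewrite -cmod_real; apply: vnormZ.
  have hu' : `|u - s| * (vnorm h + 1) < d by rewrite -ltr_pdivlMr.
  have hu0 := normr_ge0 (u - s).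
  apply: (le_trans (hd _ _)); last by apply: ler_wpM2l.
  apply: (le_lt_trans hk); apply: le_lt_trans hu'.
  by rewrite ler_wpM2l // lerDl.
have tri : forall u, `|u - s| < d' ->
    f u <= f s + q * (`|u - s| * vnorm h) /\ f s <= f u + q * (`|u - s| * vnorm h).
  move=> u hu; have st := step u hu; split.
    rewrite /f; have -> : g (z u) - g z2 = (g (z u) - g (z s)) + (g (z s) - g z2).
      by rewrite addrA subrK.
    by apply: (le_trans (vnormD _ _)); rewrite addrC lerD2l.
  rewrite /f; have -> : g (z s) - g z2 = (g (z s) - g (z u)) + (g (z u) - g z2).
    by rewrite addrA subrK.
  by apply: (le_trans (vnormD _ _)); rewrite addrC lerD2l vnormB.
have Ps : f s <= q * s * vnorm h.
  case: (eqVneq s 0) => [-> | sn0].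
    by rewrite /f z0E subrr vnorm0 mulr0 mul0r lexx.
  have sp : 0 < s by rewrite lt_def sn0 s0.
  pose u0 := Num.max 0 (s - d' / 2).
  have u00 : 0 <= u0 by rewrite le_max lexx.
  have u0s : u0 < s by rewrite gt_max sp /=; lra.
  have u0l : s - d' / 2 <= u0 by rewrite le_max lexx orbT.
  have hn : `|u0 - s| = s - u0 by rewrite distrC ger0_norm // subr_ge0 ltW.
  have hu : `|u0 - s| < d' by rewrite hn; lra.
  have [_ t2] := tri u0 hu.
  have Pu := hbelow u0 (ltac:(by rewrite u00 u0s)).
  rewrite hn in t2.
  have e1 : q * ((s - u0) * vnorm h) = q * s * vnorm h - q * u0 * vnorm h by ring.
  by rewrite e1 in t2; apply: (lin1 _ _ _ _ t2 Pu).
exists d' => // u /andP[u0 u1] hu.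
case: (ltP u s) => [us | su]; first by apply: hbelow; rewrite u0 us.
have hn : `|u - s| = u - s by rewrite ger0_norm // subr_ge0.
have hu' : `|u - s| < d' by rewrite hn; lra.
have [t1 _] := tri u hu'.
rewrite hn in t1.
have e1 : q * ((u - s) * vnorm h) = q * u * vnorm h - q * s * vnorm h by ring.
by rewrite e1 in t1; apply: (lin1 _ _ _ _ t1 Ps).
Qed.

Arguments cwithin_mul {I J a b e1 e2}.
Arguments box_dev {n B v e}.
Arguments mx_dev {n B M e}.
Arguments mulmx_vnorm {n} M v {b}.

Lemma in_cbox_center n (c : 'cV[C]_n) r : 0 <= r -> in_box (cbox c r) c.
Proof.
move=> r0 i; rewrite /in_cint /in_rint /=.
by rewrite !gerBl !lerDl r0.
Qed.
Lemma in_ptbox n (c : 'cV[C]_n) : in_box (ptbox c) c.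
Proof. by move=> i; rewrite /in_cint /in_rint /= !lexx. Qed.
Lemma width_cbox n (c : 'cV[C]_n) r d : r + r <= d -> box_width_le (cbox c r) d.
Proof. by move=> h i; rewrite /rwidth /=; split; lra. Qed.
Lemma width_ptbox n (c : 'cV[C]_n) d : 0 <= d -> box_width_le (ptbox c) d.
Proof. by move=> h i; rewrite /rwidth /= !subrr. Qed.
Lemma cbox_cwithin n (c : 'cV[C]_n) r k : 0 <= r -> cwithin (cbox c r k) (c k 0) r.
Proof.
move=> r0; split; split; rewrite /=.
- by rewrite addrAC subrr add0r normrN ger0_norm.
- by rewrite addrAC subrr add0r ger0_norm.
- by rewrite addrAC subrr add0r normrN ger0_norm.
- by rewrite addrAC subrr add0r ger0_norm.
Qed.
Arguments cbox_cwithin {n} c {r} k.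
Lemma vnorm_cbox n (c z : 'cV[C]_n) r : vnorm (z - c) <= r -> in_box (cbox c r) z.
Proof.
move=> h i; have hc := le_trans (cmod_vnorm (z - c) i) h.
rewrite !mxE in hc.
have h1 := le_trans (Re_le _) hc; have h2 := le_trans (Im_le _) hc.
rewrite ReB ler_norml in h1; rewrite ImB ler_norml in h2.
move: h1 h2 => /andP[h1 h1'] /andP[h2 h2'].
rewrite /in_cint /in_rint /=; apply/andP; split; apply/andP; split; lra.
Qed.
Lemma ReZ (s : R) (w : C) : Re (((s%:C)%C) * w) = s * Re w.
Proof. by case: w => a b /=; rewrite mul0r subr0. Qed.
Lemma ImZ (s : R) (w : C) : Im (((s%:C)%C) * w) = s * Im w.
Proof. by case: w => a b /=; rewrite mul0r addr0. Qed.
Lemma cbox_conv n (c z1 z2 : 'cV[C]_n) r (s : R) :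
  in_box (cbox c r) z1 -> in_box (cbox c r) z2 -> 0 <= s <= 1 ->
  in_box (cbox c r) (z2 + ((s%:C)%C) *: (z1 - z2)).
Proof.
move=> h1 h2 /andP[s0 s1] i; move: (h1 i) (h2 i).
rewrite /in_cint /in_rint /= !mxE ReD ImD ReZ ImZ ReB ImB.
move=> /andP[/andP[a1 a2] /andP[b1 b2]] /andP[/andP[c1 c2] /andP[d1 d2]].
apply/andP; split; apply/andP; split; nra.
Qed.

Lemma id_minus_within n (Y D : 'M[C]_n) BJ eJ A : 0 <= eJ -> 0 <= A ->
  (forall i j, cmod (Y i j) <= A) -> (forall j k, cwithin (BJ j k) (D j k) eJ) ->
  Y *m D = 1%:M ->
  forall i k, cwithin (id_minus Y BJ i k) 0 (n%:R * (2 * (A * eJ))).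
Proof.
move=> eJ0 A0 hY hB hYD i k.
have h1 : cwithin (isum (fun j => cmul (cpt (Y i j)) (BJ j k)))
            (\sum_j Y i j * D j k) (n%:R * (2 * (A * eJ))).
  apply: cwithin_isum => j.
  apply: (cwithin_le _ (cwithin_mul (lexx 0) eJ0 (cwithin_pt _) (hB j k))).
  by rewrite mul0r add0r ler_wpM2l // ler_wpM2r.
have := cwithin_sub (cwithin_pt (1%:M i k)) h1.
have -> : \sum_j Y i j * D j k = 1%:M i k by rewrite -hYD mxE.
by rewrite subrr add0r.
Qed.

Lemma krawczyk_within n (x : 'cV[C]_n) (Y : 'M[C]_n) BH BJ r A eH d :
  0 <= r -> 0 <= eH -> 0 <= d -> 0 <= A ->
  (forall i j, cmod (Y i j) <= A) -> (forall j, cwithin (BH j) 0 eH) ->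
  (forall i k, cwithin (id_minus Y BJ i k) 0 d) ->
  forall i, cwithin (krawczyk x Y BH BJ (cbox x r) i) (x i 0)
                    (n%:R * (2 * (A * eH)) + n%:R * (2 * (d * r))).
Proof.
move=> r0 eH0 d0 A0 hY hH hid i.
have h1 : cwithin (imxv (ptmx Y) BH i) (\sum_j Y i j * 0) (n%:R * (2 * (A * eH))).
  apply: cwithin_isum => j.
  apply: (cwithin_le _ (cwithin_mul (lexx 0) eH0 (cwithin_pt _) (hH j))).
  by rewrite mul0r add0r ler_wpM2l // ler_wpM2r.
have h2 : cwithin (imxv (id_minus Y BJ) (ibsub (cbox x r) (ptbox x)) i)
            (\sum_(k < n) (0 : C) * 0) (n%:R * (2 * (d * r))).
  apply: cwithin_isum => k.
  have hk : cwithin (ibsub (cbox x r) (ptbox x) k) 0 r.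
    have := cwithin_sub (cbox_cwithin x k r0) (cwithin_pt (x k 0)).
    by rewrite subrr addr0.
  apply: (cwithin_le _ (cwithin_mul d0 r0 (hid i k) hk)).
  by rewrite cmod0 add0r mul0r addr0.
have := cwithin_add (cwithin_sub (cwithin_pt (x i 0)) h1) h2.
rewrite big1; last by move=> j _; rewrite mulr0.
rewrite big1; last by move=> j _; rewrite mulr0.
by rewrite subr0 addr0 add0r.
Qed.

Lemma opnorm_within n (B : imx R n) d : 0 <= d -> (forall i k, cwithin (B i k) 0 d) ->
  forall M, in_imx B M -> opnorm_le M (n%:R * (2 * d)).
Proof.
move=> d0 hB M hM v; apply: (mulmx_vnorm M v); first by rewrite mulr_ge0.
move=> i j; have [hh1 hh2] := hB i j.
move: (hM i j); rewrite /in_cint => /andP[m1 m2].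
have e1 := within_in _ _ _ _ hh1 m1.
have e2 := within_in _ _ _ _ hh2 m2.
rewrite Re0 subr0 in e1; rewrite Im0 subr0 in e2.
apply: (le_trans (cmod_le _)); rewrite mulr2n mulrDl mul1r; exact: lerD.
Qed.

Lemma mnorm_ge0 n (M : 'M[C]_n) : 0 <= mnorm M.
Proof.
rewrite /mnorm; elim/big_ind: _ => //; first by move=> x y hx hy; rewrite le_max hx.
move=> i _; elim/big_ind: _ => //; first by move=> x y hx hy; rewrite le_max hx.
by move=> j _; exact: cmod_ge0.
Qed.

Lemma cwithin_cbox n (I : cint R) (c : 'cV[C]_n) i e r w :
  cwithin I (c i 0) e -> e <= r -> in_cint I w -> in_cint (cbox c r i) w.
Proof.
move=> [h1 h2] er /andP[m1 m2].
have e1 := within_in _ _ _ _ h1 m1; have e2 := within_in _ _ _ _ h2 m2.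
rewrite ler_norml in e1; rewrite ler_norml in e2.
move: e1 e2 => /andP[e1 e1'] /andP[e2 e2'].
rewrite /in_cint /in_rint /=; apply/andP; split; apply/andP; split; lra.
Qed.

Arguments id_minus_within {n Y D BJ eJ A}.
Arguments krawczyk_within {n} x {Y BH BJ r A eH d}.
Arguments opnorm_within {n B d}.
Arguments cwithin_cbox {n I c i e r w}.
Arguments local_contr {n G DG Y z c q CY}.
Arguments seg_lip {n g S q}.
End Basics.

Arguments cwithin {R}.
Arguments within {R}.
Arguments mnorm_ge0 {R n}.
Arguments cmod_mnorm {R n}.
Arguments mulmx_vnorm {R n} M v {b}.
Arguments small_pos {R K b}.
Arguments width_cbox {R n c r d}.
Arguments in_cbox_center {R n c r}.
Arguments mx_dev {R n B M e}.
Arguments box_dev {R n B v e}.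
Arguments id_minus_within {R n Y D BJ eJ A}.
Arguments width_ptbox {R n c d}.
Arguments in_ptbox {R n} c.
Arguments cmodB {R}.
Arguments vnorm_ge0 {R n}.
Arguments seg_lip {R n g S q}.
Arguments cbox_conv {R n c z1 z2 r s}.
Arguments local_contr {R n G DG Y z c q CY}.
Arguments vnormD {R n}.
Arguments vnormN {R n}.
Arguments vnormB {R n}.
Arguments vnorm0 {R n}.
Arguments vnorm_eq0 {R n}.
Arguments krawczyk_within {R n} x {Y BH BJ r A eH d}.
Arguments cwithin_cbox {R n I c i e r w}.
Arguments opnorm_within {R n B d}.
Arguments vnorm_cbox {R n c z r}.
Arguments real_ind {R a b P}.

Theorem theorem4p1 (R : realType) (n m : nat)
    (F : 'cV[R[i]]_n -> 'cV[R[i]]_m -> 'cV[R[i]]_n) (p0 p1 : 'cV[R[i]]_m)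
    (DH : 'cV[R[i]]_n -> R -> 'M[R[i]]_n)
    (D2H : 'cV[R[i]]_n -> R -> 'I_n -> 'M[R[i]]_n)
    (boxH : ibox R n -> rint R -> ibox R n)
    (boxDH : ibox R n -> rint R -> imx R n)
    (boxD2H : ibox R n -> rint R -> iten R n)
    (xstar : 'cV[R[i]]_n) (t0 L dt0 : R) (xp : R -> 'cV[R[i]]_n) :
  affine_in_params F ->
  (forall t, 0 <= t <= 1 -> forall x,
     cderiv (fun y => homotopy F p0 p1 y t) (DH x t) x /\
     cderivM (fun y => DH y t) (D2H x t) x) ->
  encloses_v (homotopy F p0 p1) boxH -> converges_v (homotopy F p0 p1) boxH ->
  encloses_m DH boxDH -> converges_m DH boxDH ->
  encloses_t D2H boxD2H ->
  0 <= t0 <= 1 ->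
  homotopy F p0 p1 xstar t0 = 0 ->
  0 < L ->
  (forall D, in_iten (boxD2H (cbox xstar 1) (0, 1)) D -> tnorm_le D L) ->
  0 < dt0 -> t0 + dt0 <= 1 ->
  xp t0 = xstar ->
  path_continuous_on xp t0 (t0 + dt0) ->
  (forall t, t0 <= t <= t0 + dt0 ->
     homotopy F p0 p1 (xp t) t = 0 /\ DH (xp t) t \in unitmx) ->
  let Y := invmx (DH xstar t0) in
  exists r dt : R,
    [/\ 0 < r < 1, 0 < dt < 1 & dt <= dt0] /\
    [/\ box_sub (krawczyk xstar Y (boxH (ptbox xstar) (t0, t0 + dt))
                              (boxDH (cbox xstar r) (t0, t0 + dt))
                              (cbox xstar r))
              (cbox xstar r),
      (exists2 c : R, c < (Num.sqrt 2)^-1 &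
         forall M, in_imx (id_minus Y (boxDH (cbox xstar r) (t0, t0 + dt))) M ->
           opnorm_le M c) &
      (forall t, t0 <= t <= t0 + dt ->
         in_box (cbox xstar r) (xp t) /\
         forall z, in_box (cbox xstar r) z -> homotopy F p0 p1 z t = 0 -> z = xp t)].
Proof.
move=> _ hder encH convH encDH convDH _ /andP[t00 t01] H0 _ _ dt0p hdt0 xp0 hcont hpath Y.
set H := homotopy F p0 p1.
have N0 : 0 <= n%:R :> R by apply: ler0n.
set A := mnorm Y.
have A0 : 0 <= A by apply: mnorm_ge0.
have hYA : forall i j, cmod (Y i j) <= A by move=> i j; apply: cmod_mnorm.
have t0r : t0 <= t0 <= t0 + dt0 by rewrite lexx lerDl ltW.
have hU : DH xstar t0 \in unitmx by have := (hpath t0 t0r).2; rewrite xp0.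
have hYD : Y *m DH xstar t0 = 1%:M by apply: mulVmx.
have hYv : forall v, vnorm (Y *m v) <= (n%:R * A) * vnorm v.
  by move=> v; apply: mulmx_vnorm.
have NA0 : 0 <= n%:R * A by rewrite mulr_ge0.
have K10 : 0 <= n%:R * (2 * (n%:R * (2 * A))) by rewrite !mulr_ge0.
have [eJ eJp heJ] := small_pos K10 (ltac:(lra) : 0 < 1 / 2 :> R).
set dl := n%:R * (2 * (A * eJ)).
have dl0 : 0 <= dl by rewrite /dl !mulr_ge0 // ltW.
have hdl : n%:R * (2 * dl) <= 1 / 2.
  by move: heJ; rewrite /dl; congr (_ <= _); ring.
have [dJ dJp hdJ] := convDH xstar t0 (ltac:(by rewrite t00 t01)) eJ eJp.
set r := Num.min (dJ / 2) (1 / 2).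
have r0 : 0 < r by rewrite lt_min; apply/andP; split; lra.
have r1 : r <= dJ / 2 by rewrite ge_min lexx.
have r2 : r <= 1 / 2 by rewrite ge_min lexx orbT.
have K20 : 0 <= n%:R * (8 * A) by rewrite !mulr_ge0.
have [eH eHp heH] := small_pos K20 (ltac:(lra) : 0 < r / 2).
have [dH dHp hdH] := convH xstar t0 (ltac:(by rewrite t00 t01)) eH eHp.
set dt := Num.min (Num.min dJ dH) (Num.min dt0 (1 / 2)).
have dtp : 0 < dt.
  by rewrite !lt_min dJp dHp dt0p /=; lra.
have dt1 : dt <= dJ by rewrite !ge_min lexx.
have dt2 : dt <= dH by rewrite !ge_min lexx orbT.
have dt3 : dt <= dt0 by rewrite !ge_min lexx !orbT.
have dt4 : dt <= 1 / 2 by rewrite !ge_min lexx !orbT.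
set T := (t0, t0 + dt).
have hT1 : 0 <= T.1 by [].
have hT2 : T.2 <= 1 by rewrite /=; lra.
have hTt0 : in_rint T t0 by rewrite /in_rint /= lexx lerDl ltW.
have wr : box_width_le (cbox xstar r) dJ by apply: width_cbox; lra.
have wTJ : rwidth T <= dJ by rewrite /rwidth /=; lra.
have wTH : rwidth T <= dH by rewrite /rwidth /=; lra.
have inx : in_box (cbox xstar r) xstar by apply: in_cbox_center; apply: ltW.
have BJdev : forall M, in_imx (boxDH (cbox xstar r) T) M -> mnorm (M - DH xstar t0) <= eJ.
  exact: hdJ.
have DH0in : in_imx (boxDH (cbox xstar r) T) (DH xstar t0) by apply: encDH.
have BJc := mx_dev DH0in BJdev.
have hid := id_minus_within (ltW eJp) A0 hYA BJc hYD.
have BHdev : forall y, in_box (boxH (ptbox xstar) T) y -> vnorm (y - H xstar t0) <= eH.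
  apply: hdH => //; first exact: in_ptbox.
  by apply: width_ptbox; apply: ltW.
have H0in : in_box (boxH (ptbox xstar) T) (H xstar t0).
  by apply: encH => //; apply: in_ptbox.
have BHc : forall j, cwithin (boxH (ptbox xstar) T j) 0 eH.
  by move=> j; have := box_dev H0in BHdev j; rewrite /H H0 mxE.
exists r, dt; split.
  by rewrite r0 dtp dt3; split => //; lra.
have inT : forall t, t0 <= t <= t0 + dt -> 0 <= t <= 1 /\ in_rint T t /\ t <= t0 + dt0.
  move=> t /andP[h1 h2]; split; first by apply/andP; split; lra.
  by split; [rewrite /in_rint h1 h2 | lra].
have hc : forall z t, in_box (cbox xstar r) z -> t0 <= t <= t0 + dt ->
    forall v, vnorm ((1%:M - Y *m DH z t) *m v) <= 1 / 2 * vnorm v.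
  move=> z t hz ht v.
  have [_ [hTt _]] := inT t ht.
  have hD : mnorm (DH z t - DH xstar t0) <= eJ by apply: BJdev; apply: encDH.
  have -> : 1%:M - Y *m DH z t = Y *m (DH xstar t0 - DH z t) by rewrite mulmxBr hYD.
  rewrite -mulmxA; apply: (le_trans (hYv _)).
  have hDe : forall i j, cmod ((DH xstar t0 - DH z t) i j) <= eJ.
    move=> i j; rewrite !mxE cmodB; apply: le_trans hD.
    by have := cmod_mnorm (DH z t - DH xstar t0) i j; rewrite !mxE.
  have := mulmx_vnorm (DH xstar t0 - DH z t) v (ltW eJp) hDe => h1.
  have vv0 := vnorm_ge0 v.
  have h2 := ler_wpM2l NA0 h1.
  have h3 := ler_wpM2r vv0 heJ.
  have h4 : 0 <= n%:R * A * (n%:R * eJ * vnorm v) by rewrite !mulr_ge0 // ltW.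
  have e1 : n%:R * (2 * (n%:R * (2 * A))) * eJ * vnorm v =
            4 * (n%:R * A * (n%:R * eJ * vnorm v)) by ring.
  clear -h2 h3 h4 e1; lra.
pose g t (z : 'cV[R[i]]_n) := z - Y *m H z t.
have lip : forall t, t0 <= t <= t0 + dt -> forall z1 z2,
    in_box (cbox xstar r) z1 -> in_box (cbox xstar r) z2 ->
    vnorm (g t z1 - g t z2) <= 3 / 4 * vnorm (z1 - z2).
  move=> t ht; have [t01' _] := inT t ht.
  apply: (seg_lip (g := g t) (S := in_box (cbox xstar r))).
  - lra.
  - by move=> z1 z2 s h1 h2 hs; apply: cbox_conv.
  move=> z hz.
  have := local_contr (hder t t01' z).1 NA0 (ltac:(lra) : 1 / 2 < 3 / 4 :> R) (hc z t hz ht) hYv.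
  by [].
have gap : forall t, t0 <= t <= t0 + dt -> forall z, in_box (cbox xstar r) z ->
    H z t = 0 -> vnorm (z - xstar) <= r / 2.
  move=> t ht z hz Hz.
  have [_ [hTt _]] := inT t ht.
  have hHx : vnorm (H xstar t) <= eH.
    have := BHdev (H xstar t) (ltac:(apply: encH => //; apply: in_ptbox)).
    by rewrite /H H0 subr0.
  have e : z - xstar = (g t z - g t xstar) - Y *m H xstar t.
    by rewrite /g Hz mulmx0 subr0 opprB [RHS]addrAC [RHS]addrA subrK.
  have h1 := lip t ht z xstar hz inx.
  have h2 : vnorm (z - xstar) <= vnorm (g t z - g t xstar) + vnorm (Y *m H xstar t).
    by rewrite {1}e; apply: (le_trans (vnormD _ _)); rewrite vnormN.
  have h3 : vnorm (Y *m H xstar t) <= n%:R * A * eH.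
    by apply: (le_trans (hYv _)); apply: ler_wpM2l.
  have h4 : 0 <= n%:R * A * eH by rewrite mulr_ge0 // ltW.
  have e2 : n%:R * (8 * A) * eH = 8 * (n%:R * A * eH) by ring.
  clear -h1 h2 h3 h4 e2 heH; lra.
split.
- move=> v hv i.
  have kw := krawczyk_within xstar (ltW r0) (ltW eHp) dl0 A0 hYA BHc hid i.
  apply: (cwithin_cbox kw _ (hv i)).
  have h1 : n%:R * (2 * (dl * r)) = n%:R * (2 * dl) * r by ring.
  have h2 := ler_wpM2r (ltW r0) hdl.
  have h3 : 0 <= n%:R * A * eH by rewrite mulr_ge0 // ltW.
  have e2 : n%:R * (8 * A) * eH = 8 * (n%:R * A * eH) by ring.
  have e3 : n%:R * (2 * (A * eH)) = 2 * (n%:R * A * eH) by ring.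
  rewrite h1 e3; clear -h2 h3 e2 heH; lra.
- exists (1 / 2).
    have s2 : Num.sqrt 2 < 2 :> R.
      rewrite -[X in _ < X](@ger0_norm _ 2) // -sqrtr_sqr ltr_sqrt; last by rewrite exprn_gt0.
      by rewrite expr2; lra.
    have s0 : 0 < Num.sqrt 2 :> R by rewrite sqrtr_gt0.
    rewrite mul1r ltf_pV2 ?posrE //.
  move=> M hM v.
  have := opnorm_within dl0 hid M hM v => h.
  apply: (le_trans h); apply: ler_wpM2r => //; exact: vnorm_ge0.
have promote : forall u, t0 <= u <= t0 + dt -> vnorm (xp u - xstar) <= r ->
    vnorm (xp u - xstar) <= r / 2.
  move=> u hu h; have [_ [_ hu0]] := inT u hu.
  apply: (gap u hu); first by apply: vnorm_cbox.
  by apply: (hpath u _).1; move: hu => /andP[u1 _]; rewrite u1 hu0.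
have path : forall t, t0 <= t <= t0 + dt -> vnorm (xp t - xstar) <= r / 2.
  apply: (@real_ind _ t0 (t0 + dt) (fun t => vnorm (xp t - xstar) <= r / 2)).
    by rewrite lerDl ltW.
  move=> s hs below.
  have [_ [_ hs0]] := inT s hs.
  have hs' : t0 <= s <= t0 + dt0 by move: hs => /andP[h1 _]; rewrite h1 hs0.
  have [dc dcp hdc] := hcont s hs' (r / 4) (ltac:(lra)).
  have near : forall u, t0 <= u <= t0 + dt -> `|u - s| < dc ->
      vnorm (xp s - xstar) <= r / 2 -> vnorm (xp u - xstar) <= r / 2.
    move=> u hu hus hPs; apply: promote => //.
    have [_ [_ hu0]] := inT u hu.
    have := hdc u (ltac:(by move: hu => /andP[u1 _]; rewrite u1 hu0)) hus => h1.
    have -> : xp u - xstar = (xp u - xp s) + (xp s - xstar) by rewrite addrA subrK.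
    apply: (le_trans (vnormD _ _)); clear -h1 hPs r0; lra.
  have Ps : vnorm (xp s - xstar) <= r / 2.
    case: (eqVneq s t0) => [-> | sn0].
      by rewrite xp0 subrr vnorm0; lra.
    move: hs => /andP[s1 s2].
    have sp : t0 < s by rewrite lt_def sn0 s1.
    pose u0 := Num.max t0 (s - dc / 2).
    have u01 : t0 <= u0 by rewrite le_max lexx.
    have u0s : u0 < s by rewrite gt_max sp /=; lra.
    have u0l : s - dc / 2 <= u0 by rewrite le_max lexx orbT.
    have hn : `|u0 - s| = s - u0 by rewrite distrC ger0_norm // subr_ge0 ltW.
    have hu : `|u0 - s| < dc by rewrite hn; lra.
    have Pu := below u0 (ltac:(by rewrite u01 u0s)).
    have hu0r : t0 <= u0 <= t0 + dt0 by rewrite u01 /=; lra.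
    have h1 := hdc u0 hu0r hu.
    apply: promote; first by rewrite s1 s2.
    have -> : xp s - xstar = (xp s - xp u0) + (xp u0 - xstar) by rewrite addrA subrK.
    apply: (le_trans (vnormD _ _)); rewrite vnormB; clear -h1 Pu r0; lra.
  exists dc => // u hu hus.
  case: (ltP u s) => [us | su].
    by apply: below; move: hu => /andP[u1 _]; rewrite u1 us.
  apply: near => //.
  have hn : `|u - s| = u - s by rewrite ger0_norm // subr_ge0.
  by rewrite hn; lra.
move=> t ht; split.
  by apply: vnorm_cbox; apply: (le_trans (path t ht)); lra.
move=> z hz Hz.
have [_ [_ ht0]] := inT t ht.
have hxt : in_box (cbox xstar r) (xp t).
  by apply: vnorm_cbox; apply: (le_trans (path t ht)); lra.
have Hx : H (xp t) t = 0.
  by apply: (hpath t _).1; move: ht => /andP[t1 _]; rewrite t1 ht0.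
have h1 := lip t ht z (xp t) hz hxt.
have e : g t z - g t (xp t) = z - xp t by rewrite /g Hz Hx !mulmx0 !subr0.
rewrite e in h1.
have h0 : vnorm (z - xp t) <= 0 by have := vnorm_ge0 (z - xp t); lra.
by apply/eqP; rewrite -subr_eq0; apply/eqP; apply: vnorm_eq0.
Qed.
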